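(* Let $N\ge2$ and $1>\mu_1>\mu_2>\dots>\mu_N>0$. Consider the partial monitoring game with $M=2^N$ outcomes and $A=2$ symbols where $L=H\in\mathbb{R}^{N\times2^N}$ with $l_{i,j}=h_{i,j}=\mathbb{1}[(j-1\bmod 2^i)<2^{i-1}]+1$, and opponent strategy $p^*\in\mathcal{P}_{2^N}$ with $p^*_j=\prod_{i\in[N]}(\mu_i+(1-2\mu_i)\mathbb{1}[(j-1\bmod2^i)<2^{i-1}])$ (the $N$-armed Bernoulli bandit with means $\mu_i$ represented as partial monitoring). Then: (1) the set $\mathcal{R}^*_1(p^*,\{S_ip^*,0\})$ is a singleton; (2) with $\mathcal{S}_\delta=\{q\in\mathcal{P}_M:D(S_1p^*\Vert S_1q)\le\delta\}$, $\mathrm{cl}(\mathrm{int}(\mathcal{C}_1^c)\cap\mathcal{S}_\delta)=\mathrm{cl}(\mathrm{cl}(\mathcal{C}_1^c)\cap\mathcal{S}_\delta)$ for all $\delta\ge0$ in a neighborhood of $0$; and (3) $C_1(p^*,\{S_ip^*\})=\sum_{i\ne1}\Delta_i/d(\mu_i\Vert\mu_1)$, where $\Delta_i=(L_i-L_1)^\top p^*$ and $d(p\Vert q)=p\log(p/q)+(1-p)\log((1-p)/(1-q))$.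
   Context: $\mathcal{P}_M$ is the set of probability distributions on $[M]$; $L_i$ is the $i$-th row of $L$. Signal matrices $S_i\in\{0,1\}^{A\times M}$ with $(S_i)_{k,j}=1$ iff $h_{i,j}=k$ (so $(S_ip^* )_1=\mu_i$). Cells $\mathcal{C}_j=\{q\in\mathcal{P}_M:\forall i\ne j,(L_j-L_i)^\top q\le0\}$, $\mathcal{C}_j^c=\mathcal{P}_M\setminus\mathcal{C}_j$; $\mathrm{cl},\mathrm{int}$ denote closure and interior in $\mathcal{P}_M$. $D$ is the KL divergence of discrete distributions ($0\log(0/0)=0$), $(x)_+=\max(x,0)$. For distributions $p_i$ on $[A]$ and $\delta_i\ge0$: $\mathcal{R}_j(\{p_i,\delta_i\})=\{\{r_i\}_{i\ne j}\in[0,\infty)^{N-1}:\inf_{q\in\mathrm{cl}(\mathcal{C}_j^c):D(p_j\Vert S_jq)\le\delta_j}\sum_{i\ne j}r_i(D(p_i\Vert S_iq)-\delta_i)_+\ge1\}$, $C_j(p,\{p_i,\delta_i\})=\inf_{\{r_i\}\in\mathcal{R}_j(\{p_i,\delta_i\})}\sum_{i\ne j}r_i(L_i-L_j)^\top p$, $C_j(p,\{p_i\})=C_j(p,\{p_i,0\})$, and $\mathcal{R}^*_j(p,\{p_i,\delta_i\})$ is the set of minimizers. *)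

(* Defs.v *)
From HB Require Import structures.
From mathcomp Require Import all_boot all_order all_algebra.
From mathcomp Require Import all_classical all_reals all_analysis.
Set Implicit Arguments. Unset Strict Implicit. Unset Printing Implicit Defensive.
Import Order.TTheory GRing.Theory Num.Theory.
Local Open Scope classical_set_scope.
Local Open Scope ring_scope.

Section PM.
Variable R : realType.

Definition simplex (M : nat) : set ('I_M -> R) :=
  [set q | (forall j, 0 <= q j) /\ \sum_(j < M) q j = 1].

(* closure and interior relative to the subspace P (topology induced by R^M,
   written with the sup-distance) *)
Definition relcl (M : nat) (P X : set ('I_M -> R)) : set ('I_M -> R) :=
  [set q | P q /\ forall e : R, 0 < e ->
     exists x, X x /\ forall k, `|x k - q k| < e].

Definition relint (M : nat) (P X : set ('I_M -> R)) : set ('I_M -> R) :=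
  [set q | P q /\ exists e : R, 0 < e /\
     forall q', P q' -> (forall k, `|q' k - q k| < e) -> X q'].

Definition klterm (a b : R) : \bar R :=
  if a == 0 then 0%E else if b == 0 then +oo%E else (a * ln (a / b))%:E.

Definition KL (A : nat) (p q : 'I_A -> R) : \bar R :=
  (\sum_(k < A) klterm (p k) (q k))%E.

Definition Sig (N M A : nat) (h : 'I_N -> 'I_M -> 'I_A) (i : 'I_N)
  (q : 'I_M -> R) : 'I_A -> R :=
  fun k => \sum_(j < M | h i j == k) q j.

Definition cell (N M : nat) (L : 'I_N -> 'I_M -> R) (j : 'I_N) : set ('I_M -> R) :=
  [set q | simplex q /\
     forall i, i != j -> \sum_(k < M) (L j k - L i k) * q k <= 0].

Definition cellc (N M : nat) (L : 'I_N -> 'I_M -> R) (j : 'I_N) : set ('I_M -> R) :=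
  [set q | simplex q /\ ~ cell L j q].

(* R_j({p_i, delta_i}); a family {r_i}_{i != j} is encoded as r : 'I_N -> R
   with r j = 0 *)
Definition Rset (N M A : nat) (L : 'I_N -> 'I_M -> R) (h : 'I_N -> 'I_M -> 'I_A)
  (j : 'I_N) (ps : 'I_N -> 'I_A -> R) (ds : 'I_N -> R) : set ('I_N -> R) :=
  [set r | r j = 0 /\ (forall i, i != j -> 0 <= r i) /\
     (1 <= ereal_inf
        [set (\sum_(i < N | i != j)
                 (r i)%:E * maxe (KL (ps i) (Sig h i q) - (ds i)%:E) 0)%E
         | q in [set q | relcl (@simplex M) (cellc L j) q /\
                          (KL (ps j) (Sig h j q) <= (ds j)%:E)%E]])%E].

Definition Cj (N M A : nat) (L : 'I_N -> 'I_M -> R) (h : 'I_N -> 'I_M -> 'I_A)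
  (j : 'I_N) (p : 'I_M -> R) (ps : 'I_N -> 'I_A -> R) (ds : 'I_N -> R) : \bar R :=
  ereal_inf [set (\sum_(i < N | i != j) r i * \sum_(k < M) (L i k - L j k) * p k)%:E
            | r in Rset L h j ps ds].

Definition Rstar (N M A : nat) (L : 'I_N -> 'I_M -> R) (h : 'I_N -> 'I_M -> 'I_A)
  (j : 'I_N) (p : 'I_M -> R) (ps : 'I_N -> 'I_A -> R) (ds : 'I_N -> R)
  : set ('I_N -> R) :=
  [set r | Rset L h j ps ds r /\
     (\sum_(i < N | i != j) r i * \sum_(k < M) (L i k - L j k) * p k)%:E
       = Cj L h j p ps ds].

Definition dber (p q : R) : R :=
  p * ln (p / q) + (1 - p) * ln ((1 - p) / (1 - q)).

(* Bernoulli bandit as partial monitoring; 0-based indices: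
   action i : 'I_N is action i+1, outcome j : 'I_(2^N) is outcome j+1, so
   1[((j+1)-1 mod 2^(i+1)) < 2^i] = bit i j. *)
Definition bit (N : nat) (i : 'I_N) (j : 'I_(2 ^ N)) : bool :=
  (j %% 2 ^ i.+1 < 2 ^ i)%N.

Definition Lband (N : nat) : 'I_N -> 'I_(2 ^ N) -> R :=
  fun i j => (bit i j)%:R + 1.

(* H = L, with symbols {1,2} encoded as 'I_2 (symbol 1 = ord0, symbol 2 = ord_max) *)
Definition Hband (N : nat) : 'I_N -> 'I_(2 ^ N) -> 'I_2 :=
  fun i j => if bit i j then ord_max else ord0.

Definition pstar (N : nat) (mu : 'I_N -> R) : 'I_(2 ^ N) -> R :=
  fun j => \prod_(i < N) (mu i + (1 - 2 * mu i) * (bit i j)%:R).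

End PM.

(* Main.v *)
Require Import Defs.
From HB Require Import structures.
From mathcomp Require Import all_boot all_order all_algebra.
From mathcomp Require Import all_classical all_reals all_analysis.
From mathcomp Require Import ring lra.
Import Order.TTheory GRing.Theory Num.Theory.
Local Open Scope classical_set_scope.
Local Open Scope ring_scope.
Set Implicit Arguments. Unset Strict Implicit.

Lemma bitnE (j i : nat) : ((j %% 2 ^ i.+1 < 2 ^ i) = ~~ odd (j %/ 2 ^ i))%N.
Proof.
have := modn_divl j 2 (2 ^ i); rewrite modn2 -expnS => e.
rewrite ltnNge -divn_gt0 ?expn_gt0 // -e.
by case: (odd _).
Qed.

Lemma bits_inj (n j j' : nat) : (j < 2 ^ n)%N -> (j' < 2 ^ n)%N ->
  (forall i, (i < n)%N -> odd (j %/ 2 ^ i) = odd (j' %/ 2 ^ i)) -> j = j'.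
Proof.
elim: n j j' => [|n IH] j j'.
  by rewrite expn0 !ltnS !leqn0 => /eqP -> /eqP ->.
move=> hj hj' hb.
have h2 : j./2 = j'./2.
  apply: IH.
  - by rewrite -divn2 ltn_divLR // -expnSr.
  - by rewrite -divn2 ltn_divLR // -expnSr.
  move=> i hi; rewrite -!divn2 -!divnMA -expnS; exact: hb.
have h0 : odd j = odd j' by have := hb 0%N isT; rewrite expn0 !divn1.
by rewrite -[j]odd_double_half -[j']odd_double_half h0 h2.
Qed.

Section Comb.
Variable R : realType.

Lemma sum_prod_bits (N : nat) (g : 'I_N -> bool -> R) :
  \sum_(j < 2 ^ N) \prod_(i < N) g i (bit i j) =
  \prod_(i < N) (g i true + g i false).
Proof.
have -> : \prod_(i < N) (g i true + g i false) = \prod_(i < N) \sum_(b : bool) g i b.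
  by apply: eq_bigr => i _; rewrite big_bool.
rewrite bigA_distr_bigA /=.
pose phi := fun j : 'I_(2 ^ N) => [ffun i : 'I_N => bit i j].
have phi_inj : injective phi.
  move=> j j' /ffunP e; apply: val_inj; apply: (@bits_inj N); [exact: ltn_ord|exact: ltn_ord|move=> i hi].
  have := e (Ordinal hi); rewrite !ffunE /bit !bitnE /=.
  by move/negb_inj.
have phi_bij : bijective phi.
  apply: (inj_card_bij phi_inj); rewrite card_ffun card_bool !card_ord //.
rewrite (reindex phi) /=; last exact: onW_bij.
by apply: eq_bigr => j _; apply: eq_bigr => i _; rewrite ffunE.
Qed.

Section Marg.
Variable N : nat.
Local Notation M := (2 ^ N)%N.

Lemma Hband_ord0 (i : 'I_N) (j : 'I_M) : (Hband i j == ord0) = ~~ bit i j.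
Proof. by rewrite /Hband; case: (bit i j). Qed.

Lemma Hband_max (i : 'I_N) (j : 'I_M) : (Hband i j == ord_max) = bit i j.
Proof. by rewrite /Hband; case: (bit i j). Qed.

Lemma sig0E (i : 'I_N) (q : 'I_M -> R) :
  Sig (@Hband N) i q ord0 = \sum_j (~~ bit i j)%:R * q j.
Proof.
rewrite /Sig big_mkcond; apply: eq_bigr => j _.
by rewrite Hband_ord0; case: (bit i j); rewrite ?mul0r ?mul1r.
Qed.

Lemma sigmaxE (i : 'I_N) (q : 'I_M -> R) :
  Sig (@Hband N) i q ord_max = \sum_j (bit i j)%:R * q j.
Proof.
rewrite /Sig big_mkcond; apply: eq_bigr => j _.
by rewrite Hband_max; case: (bit i j); rewrite ?mul0r ?mul1r.
Qed.

Lemma sig_tot (i : 'I_N) (q : 'I_M -> R) :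
  Sig (@Hband N) i q ord0 + Sig (@Hband N) i q ord_max = \sum_j q j.
Proof.
rewrite sig0E sigmaxE -big_split; apply: eq_bigr => j _.
by case: (bit i j); rewrite /= ?mul0r ?mul1r ?add0r ?addr0.
Qed.

Lemma pstar_sum (nu : 'I_N -> R) : \sum_j pstar nu j = 1.
Proof.
rewrite /pstar (@sum_prod_bits N (fun i b => nu i + (1 - 2 * nu i) * b%:R)).
by apply: big1 => i _; rewrite mulr1 mulr0 addr0; ring.
Qed.

Lemma pstar_marg (nu : 'I_N -> R) (i : 'I_N) :
  Sig (@Hband N) i (pstar nu) ord0 = nu i.
Proof.
rewrite sig0E.
pose g := fun (k : 'I_N) (b : bool) =>
  (nu k + (1 - 2 * nu k) * b%:R) * (if k == i then (~~ b)%:R else 1).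
transitivity (\sum_(j < M) \prod_(k < N) g k (bit k j)).
  apply: eq_bigr => j _; rewrite /g big_split /= mulrC; congr (_ * _).
  rewrite (bigD1 i) //= eqxx big1 ?mulr1 // => k /negbTE ->; done.
rewrite sum_prod_bits (bigD1 i) //= big1 ?mulr1.
  rewrite /g eqxx /=; ring.
by move=> k /negbTE hk; rewrite /g hk !mulr1 mulr0 addr0; ring.
Qed.

Lemma pstar_ge0 (nu : 'I_N -> R) : (forall i, 0 <= nu i <= 1) ->
  forall j, 0 <= pstar nu j.
Proof.
move=> hnu j; rewrite /pstar; apply: prodr_ge0 => i _.
have /andP[h0 h1] := hnu i.
by case: (bit i j); rewrite /= ?mulr1 ?mulr0 ?addr0 //; lra.
Qed.

End Marg.

Definition kb (a x : R) : \bar R := (klterm a x + klterm (1 - a) (1 - x))%E.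

Lemma KL2 (p q : 'I_2 -> R) :
  KL p q = (klterm (p ord0) (q ord0) + klterm (p ord_max) (q ord_max))%E.
Proof.
rewrite /KL (bigD1 ord0) //= (bigD1 ord_max) //= big1 ?adde0 //.
by move=> [[|[|k]] hk] //= /andP[].
Qed.

Lemma ln_lb (t : R) : 0 < t -> 1 - t^-1 <= ln t.
Proof.
move=> t0.
have h : 1 + ln (t^-1) <= t^-1.
  by have := expR_ge1Dx (ln t^-1); rewrite lnK // posrE invr_gt0.
rewrite lnV ?posrE // in h; lra.
Qed.

Lemma ln_lb_strict (t : R) : 0 < t -> t != 1 -> 1 - t^-1 < ln t.
Proof.
move=> t0 t1.
have h : 1 + ln (t^-1) < t^-1.
  have := @expR_gt1Dx R (ln t^-1); rewrite lnK ?posrE ?invr_gt0 //; apply.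
  by rewrite ln_eq0 ?invr_gt0 // invr_eq1.
rewrite lnV ?posrE // in h; lra.
Qed.

Lemma dberE (a x : R) : 0 < a -> 0 < x -> a < 1 -> x < 1 ->
  dber a x = a * (ln a - ln x) + (1 - a) * (ln (1 - a) - ln (1 - x)).
Proof.
move=> a0 x0 a1 x1; rewrite /dber !ln_div // posrE; lra.
Qed.

Lemma dber_pos (a x : R) : 0 < a < 1 -> 0 < x < 1 -> x != a -> 0 < dber a x.
Proof.
move=> /andP[a0 a1] /andP[x0 x1] xa; rewrite /dber.
have h1 : 1 - (a / x)^-1 < ln (a / x).
  apply: ln_lb_strict; first by apply: divr_gt0.
  apply/negP => /eqP e; move: xa; rewrite -(divr1_eq e) eqxx //.
have h2 : 1 - ((1 - a) / (1 - x))^-1 <= ln ((1 - a) / (1 - x)).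
  apply: ln_lb; apply: divr_gt0; lra.
rewrite !invf_div in h1 h2.
have e : a * (1 - x / a) + (1 - a) * (1 - (1 - x) / (1 - a)) = 0.
  by field; apply/andP; split; apply/eqP; lra.
have h1' : a * (1 - x / a) < a * ln (a / x) by rewrite ltr_pM2l.
have h2' : (1 - a) * (1 - (1 - x) / (1 - a)) <= (1 - a) * ln ((1 - a) / (1 - x)).
  by apply: ler_wpM2l => //; lra.
lra.
Qed.

Lemma dber_mono (a y x : R) : 0 < a -> a <= y -> y <= x -> x < 1 ->
  dber a y <= dber a x.
Proof.
move=> a0 ay yx x1.
have y0 : 0 < y by lra.
have x0 : 0 < x by lra.
rewrite !dberE //; try lra.
have h1 : 1 - (y / x)^-1 <= ln (y / x) by apply: ln_lb; apply: divr_gt0.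
have h2 : 1 - ((1 - y) / (1 - x))^-1 <= ln ((1 - y) / (1 - x)).
  apply: ln_lb; apply: divr_gt0; lra.
rewrite !invf_div in h1 h2.
rewrite !ln_div ?posrE in h1 h2; try lra.
have e : a * (1 - x / y) + (1 - a) * (1 - (1 - x) / (1 - y)) =
   (x - y) * (y - a) / (y * (1 - y)).
  by field; apply/andP; split; apply/eqP; lra.
have g : 0 <= (x - y) * (y - a) / (y * (1 - y)).
  apply: divr_ge0; [apply: mulr_ge0|apply: mulr_ge0]; lra.
have h1' := ler_wpM2l (ltW a0) h1.
have h2' : (1 - a) * (1 - (1 - x) / (1 - y)) <= (1 - a) * (ln (1 - y) - ln (1 - x)).
  by apply: ler_wpM2l => //; lra.
lra.
Qed.


Lemma kb_fin (a x : R) : 0 < a < 1 -> 0 < x < 1 -> kb a x = (dber a x)%:E.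
Proof.
move=> /andP[a0 a1] /andP[x0 x1].
rewrite /kb /klterm !ifN; try (apply/eqP; lra).
by rewrite /dber EFinD.
Qed.

Lemma kb_one (a : R) : 0 < a < 1 -> kb a 1 = +oo%E.
Proof.
move=> /andP[a0 a1]; rewrite /kb /klterm subrr eqxx !ifN; try (apply/eqP; lra).
by [].
Qed.

Lemma kb_zero (a : R) : 0 < a < 1 -> kb a 0 = +oo%E.
Proof.
move=> /andP[a0 a1]; rewrite /kb /klterm eqxx !ifN; try (apply/eqP; lra).
by rewrite subr0 /=.
Qed.

Lemma dber_self (a : R) : 0 < a -> a < 1 -> dber a a = 0.
Proof.
move=> a0 a1; rewrite /dber !divff ?ln1 ?mulr0 ?addr0 //; apply/eqP; lra.
Qed.

Lemma kb_le0 (a x : R) : 0 < a < 1 -> 0 <= x <= 1 -> (kb a x <= 0)%E -> x = a.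
Proof.
move=> ha /andP[x0 x1].
have [->|xn0] := eqVneq x 0; first by rewrite kb_zero.
have [->|xn1] := eqVneq x 1; first by rewrite kb_one.
have hx : 0 < x < 1 by rewrite !lt_neqAle xn1 x0 x1 eq_sym xn0.
rewrite kb_fin // lee_fin.
have [->//|xa] := eqVneq x a.
by have := @dber_pos a x ha hx xa; lra.
Qed.

Lemma kb_ge (a y x : R) : 0 < a -> a <= y -> y <= x -> x <= 1 -> y < 1 ->
  ((dber a y)%:E <= kb a x)%E.
Proof.
move=> a0 ay yx x1 y1.
have [->|xn1] := eqVneq x 1; first by rewrite kb_one ?leey //; apply/andP; split; lra.
have hx1 : x < 1 by rewrite lt_neqAle xn1 x1.
rewrite kb_fin ?lee_fin; try (apply/andP; split; lra).
exact: dber_mono.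
Qed.

End Comb.

Section Main.
Variable R : realType.
Variable N : nat.
Variable mu : 'I_N -> R.
Variable i1 : 'I_N.
Hypothesis hi1 : nat_of_ord i1 = 0%N.
Hypothesis hmu1 : mu i1 < 1.
Hypothesis hdec : forall i k : 'I_N, (i < k)%N -> mu k < mu i.
Hypothesis hmu0 : forall i : 'I_N, 0 < mu i.
Local Notation M := (2 ^ N)%N.
Local Notation L := (@Lband R N).
Local Notation h := (@Hband N).
Local Notation p := (pstar mu).
Local Notation simp := (@simplex R M).
Definition m (i : 'I_N) (q : 'I_M -> R) := Sig h i q ord0.

Lemma mu_lt k : k != i1 -> mu k < mu i1.
Proof.
move=> k1; apply: hdec; rewrite hi1 lt0n; apply: contra k1 => /eqP e.
by apply/eqP/val_inj; rewrite /= e hi1.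
Qed.

Lemma mu_range k : 0 < mu k < 1.
Proof.
rewrite hmu0 /=; have [->//|k1] := eqVneq k i1.
exact: (lt_trans (mu_lt k1) hmu1).
Qed.

Lemma simp_max i q : simp q -> Sig h i q ord_max = 1 - m i q.
Proof. by case=> _ s1; rewrite -s1 -(@sig_tot R N i q) /m; ring. Qed.

Lemma m_range i q : simp q -> 0 <= m i q <= 1.
Proof.
move=> sq; have e := simp_max i sq.
have a : 0 <= m i q by rewrite /m /Sig; apply: sumr_ge0 => j _; case: sq.
have b : 0 <= Sig h i q ord_max by rewrite /Sig; apply: sumr_ge0 => j _; case: sq.
apply/andP; split; lra.
Qed.

Lemma KLsig i a b : simp a -> simp b ->
  KL (Sig h i a) (Sig h i b) = kb (m i a) (m i b).
Proof. by move=> sa sb; rewrite KL2 (simp_max i sa) (simp_max i sb). Qed.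

Lemma m_pstar nu i : m i (pstar nu) = nu i.
Proof. exact: pstar_marg. Qed.

Lemma simp_pstar nu : (forall i, 0 <= nu i <= 1) -> simp (pstar nu).
Proof. by move=> hnu; split; [exact: pstar_ge0|exact: pstar_sum]. Qed.

Lemma loss_diff a b q :
  \sum_(k < M) (L a k - L b k) * q k = m b q - m a q.
Proof.
have ea := @sig_tot R N a q; have eb := @sig_tot R N b q.
have -> : \sum_(k < M) (L a k - L b k) * q k =
   Sig h a q ord_max - Sig h b q ord_max.
  rewrite !sigmaxE -sumrB; apply: eq_bigr => k _; rewrite /Lband; ring.
rewrite /m; lra.
Qed.

Lemma cell_iff q : simp q ->
  (cell L i1 q <-> forall i, i != i1 -> m i q <= m i1 q).
Proof.
move=> sq; split.
  by case=> _ H i hi; have := H i hi; rewrite loss_diff subr_le0.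
by move=> H; split => // i hi; rewrite loss_diff subr_le0; apply: H.
Qed.

Lemma cellc_iff q : cellc L i1 q <->
  (simp q /\ exists i, i != i1 /\ m i1 q < m i q).
Proof.
split.
  case=> sq nc; split => //; apply: contrapT => nex; apply: nc.
  apply/(cell_iff sq) => i hi; rewrite leNgt; apply/negP => lt.
  by apply: nex; exists i.
case=> sq [i [hi lt]]; split => //; move/(cell_iff sq)/(_ i hi).
by rewrite leNgt lt.
Qed.

Lemma m_close i q x e : (forall k, `|x k - q k| < e) ->
  `|m i x - m i q| <= M%:R * e.
Proof.
move=> H; rewrite /m !sig0E -sumrB.
apply: le_trans (ler_norm_sum _ _ _) _.
have -> : M%:R * e = \sum_(k < M) e by rewrite sumr_const card_ord mulr_natl.
apply: ler_sum => k _; rewrite -mulrBr normrM.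
have := H k; have := normr_ge0 (x k - q k).
case: (bit _ _); rewrite /= ?normr1 ?normr0 ?mul1r ?mul0r => a b; lra.
Qed.

Lemma M_gt0 : 0 < M%:R :> R.
Proof. by rewrite ltr0n expn_gt0. Qed.

Lemma relint_of q i : simp q -> i != i1 -> m i1 q < m i q ->
  relint simp (cellc L i1) q.
Proof.
move=> sq hi lt; split => //.
have M0 := M_gt0.
set g := m i q - m i1 q.
have g0 : 0 < g by rewrite subr_gt0.
exists (g / (4 * M%:R)); split.
  by apply: divr_gt0 => //; apply: mulr_gt0.
have eM : M%:R * (g / (4 * M%:R)) = g / 4.
  by field; apply/eqP; lra.
move=> q' sq' cl; apply/cellc_iff; split => //; exists i; split => //.
have := m_close i cl; have := m_close i1 cl; rewrite eM !ler_norml.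
move=> /andP[a b] /andP[c d]; rewrite /g in a b c d g0; lra.
Qed.

Lemma relcl_ex q : relcl simp (cellc L i1) q ->
  exists i, i != i1 /\ m i1 q <= m i q.
Proof.
case=> sq H; apply: contrapT => nex.
have g : forall i, i != i1 -> m i q < m i1 q.
  move=> i hi; rewrite ltNge; apply/negP => le; apply: nex; by exists i.
set S := 1 + \sum_(i < N | i != i1) (m i1 q - m i q)^-1.
have sum0 : 0 <= \sum_(i < N | i != i1) (m i1 q - m i q)^-1.
  apply: sumr_ge0 => i hi; rewrite invr_ge0 subr_ge0; exact: ltW (g i hi).
have S0 : 0 < S by rewrite /S; lra.
have M0 := M_gt0.
have eta0 : 0 < S^-1 by rewrite invr_gt0.
have [x [cx cl]] := H (S^-1 / (4 * M%:R)) (divr_gt0 eta0 (mulr_gt0 (ltr0n _ 4) M0)).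
have /cellc_iff [_ [i [hi lt]]] := cx.
have eta_le : S^-1 <= m i1 q - m i q.
  rewrite invf_ple ?posrE ?subr_gt0 ?g //.
  rewrite /S (bigD1 i) //=; set T := (X in _ <= 1 + (_ + X)).
  have : 0 <= T.
    by apply: sumr_ge0 => j /andP[hj _]; rewrite invr_ge0 subr_ge0; exact: ltW (g j hj).
  by move=> T0; rewrite addrCA lerDl; lra.
have eM : M%:R * (S^-1 / (4 * M%:R)) = S^-1 / 4.
  by field; apply/andP; split; apply/eqP; lra.
have := m_close i cl; have := m_close i1 cl; rewrite eM !ler_norml.
move=> /andP[a b] /andP[c d]; lra.
Qed.

Lemma m_mix i (t : R) q r :
  m i (fun k => (1 - t) * q k + t * r k) = (1 - t) * m i q + t * m i r.
Proof.
rewrite /m !sig0E !mulr_sumr -big_split; apply: eq_bigr => k _ /=; ring.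
Qed.

Lemma approx q i e : simp q -> i != i1 -> m i1 q < 1 -> m i1 q <= m i q ->
  0 < e -> exists x, simp x /\ m i1 x = m i1 q /\ m i1 x < m i x /\
    forall k, `|x k - q k| < e.
Proof.
move=> sq hi lt1 le e0.
pose nu := fun k => if k == i1 then m i1 q else 1.
have hnu : forall k, 0 <= nu k <= 1.
  move=> k; rewrite /nu; case: (k == i1); first exact: m_range.
  by rewrite ler01 lexx.
have sr := simp_pstar hnu.
pose t := Num.min (1 / 2) (e / 4).
have t0 : 0 < t by rewrite /t lt_min; apply/andP; split; lra.
have t1 : t <= 1 / 2 by rewrite /t ge_min lexx.
have t2 : t <= e / 4 by rewrite /t ge_min lexx orbT.
pose x := fun k => (1 - t) * q k + t * pstar nu k.
exists x; split.
  split.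
    move=> k; rewrite /x; apply: addr_ge0; apply: mulr_ge0; try lra.
      by case: sq.
    by case: sr.
  rewrite /x big_split /= -!mulr_sumr.
  by case: sq => _ ->; case: sr => _ ->; ring.
rewrite /x !m_mix !m_pstar /nu eqxx (negbTE hi); split; first ring.
split.
  have a : 0 < t * (1 - m i1 q) by apply: mulr_gt0; lra.
  have b : (1 - t) * m i1 q <= (1 - t) * m i q by apply: ler_wpM2l => //; lra.
  lra.
move=> k.
have [q0 q1] : 0 <= q k /\ q k <= 1.
  case: sq => q0 s1; split => //; rewrite -s1 (bigD1 k) //= lerDl.
  by apply: sumr_ge0.
have [r0 r1] : 0 <= pstar nu k /\ pstar nu k <= 1.
  case: sr => r0 s1; split => //; rewrite -s1 (bigD1 k) //= lerDl.
  by apply: sumr_ge0.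
have -> : (1 - t) * q k + t * pstar nu k - q k = t * (pstar nu k - q k) by ring.
rewrite normrM gtr0_norm //.
have : `|pstar nu k - q k| <= 1 by rewrite ler_norml; apply/andP; split; lra.
move=> n1; have := ler_wpM2l (ltW t0) n1; lra.
Qed.

Lemma clC_of q i : simp q -> i != i1 -> m i1 q < 1 -> m i1 q <= m i q ->
  relcl simp (cellc L i1) q.
Proof.
move=> sq hi lt1 le; split => // e e0.
have [x [sx [_ [lt cl]]]] := approx sq hi lt1 le e0.
exists x; split => //; apply/cellc_iff; split => //; by exists i.
Qed.

Lemma relcl_mono (M0 : nat) (P X Y : set ('I_M0 -> R)) :
  X `<=` Y -> relcl P X `<=` relcl P Y.
Proof.
move=> XY q [Pq H]; split => // e e0; have [x [Xx cl]] := H e e0.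
by exists x; split => //; apply: XY.
Qed.

Lemma relcl_idem (M0 : nat) (P X : set ('I_M0 -> R)) :
  relcl P (relcl P X) `<=` relcl P X.
Proof.
move=> q [Pq H]; split => // e e0.
have e20 : 0 < e / 2 by lra.
have [y [[_ Hy] cly]] := H _ e20.
have [x [Xx clx]] := Hy _ e20.
exists x; split => // k.
have -> : x k - q k = (x k - y k) + (y k - q k) by ring.
apply: le_lt_trans (ler_normD _ _) _.
have := clx k; have := cly k; lra.
Qed.

Lemma simp_p : simp p.
Proof.
apply: simp_pstar => k; have /andP[a b] := mu_range k.
by apply/andP; split; apply: ltW.
Qed.

Lemma KLp q : simp q -> KL (Sig h i1 p) (Sig h i1 q) = kb (mu i1) (m i1 q).
Proof. by move=> sq; rewrite KLsig ?m_pstar //; exact: simp_p. Qed.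

Lemma part2 (delta : R) :
  let S := [set q | simp q /\ (KL (Sig h i1 p) (Sig h i1 q) <= delta%:E)%E] in
  relcl simp (relint simp (cellc L i1) `&` S)
  = relcl simp (relcl simp (cellc L i1) `&` S).
Proof.
move=> S; apply/seteqP; split.
  apply: relcl_mono => q [[Pq [e [e0 H]]] Sq]; split => //.
  split => // e' e'0; exists q; split => [|k]; last by rewrite subrr normr0.
  by apply: H => // k; rewrite subrr normr0.
move=> q hq; apply: relcl_idem; apply: relcl_mono hq.
move=> y [cy [sy ky]].
have [i [hi le]] := relcl_ex cy.
have lt1 : m i1 y < 1.
  have /andP[_ y1] := m_range i1 sy.
  rewrite lt_neqAle y1 andbT; apply/negP => /eqP e1.
  by move: ky; rewrite KLp // e1 kb_one ?mu_range.
split => // e e0.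
have [x [sx [ex [lt cl]]]] := approx sy hi lt1 le e0.
exists x; split => //; split; first exact: (relint_of sx hi lt).
by split => //; rewrite KLp // ex -KLp.
Qed.

Local Notation d i := (dber (mu i) (mu i1)).

Lemma d_pos i : i != i1 -> 0 < d i.
Proof.
move=> hi; apply: dber_pos; try exact: mu_range.
by rewrite gt_eqF //; exact: mu_lt.
Qed.

Local Notation ps := (fun i => Sig h i p).

Lemma Rset_iff r : Rset L h i1 ps (fun _ => 0) r <->
  (r i1 = 0 /\ forall i, i != i1 -> 1 <= r i * d i).
Proof.
split.
  case=> r0 [rge hinf]; split => // i hi.
  pose nu := fun k => if k == i then mu i1 else mu k.
  have hnu : forall k, 0 <= nu k <= 1.
    move=> k; rewrite /nu; case: (k == i); have /andP[a b] := mu_range i1;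
      have /andP[c e] := mu_range k; apply/andP; split; apply: ltW => //.
  have sq := simp_pstar hnu.
  have nui1 : nu i1 = mu i1 by rewrite /nu eq_sym (negbTE hi).
  have nui : nu i = mu i1 by rewrite /nu eqxx.
  have mem : [set (\sum_(k < N | k != i1)
                 (r k)%:E * maxe (KL (ps k) (Sig h k q) - (0:R)%:E) 0)%E
         | q in [set q | relcl simp (cellc L i1) q /\
                          (KL (ps i1) (Sig h i1 q) <= (0:R)%:E)%E]]
      (\sum_(k < N | k != i1)
                 (r k)%:E * maxe (KL (ps k) (Sig h k (pstar nu)) - (0:R)%:E) 0)%E.
    exists (pstar nu) => //; split.
      apply: (clC_of sq hi); rewrite !m_pstar ?nui1 ?nui //.
    by rewrite /= KLp // m_pstar nui1 kb_fin ?mu_range // dber_self ?mu_range.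
  have := le_trans hinf (ereal_inf_lbound mem).
  rewrite (eq_bigr (fun k => (r k * (if k == i then d i else 0))%:E)); last first.
    move=> k hk /=; rewrite KLsig ?m_pstar //; last exact: simp_p.
    rewrite /nu; case: eqP => [->|_].
      rewrite kb_fin ?mu_range // sube0 max_l ?lee_fin ?EFinM //.
      exact: ltW (d_pos hi).
    have /andP[k0 k1] := mu_range k.
    by rewrite kb_fin ?mu_range // dber_self // oppr0 adde0 maxxx mule0 mulr0.
  rewrite sumEFin lee_fin (bigD1 i) //= eqxx big1 ?addr0 //.
  by move=> k /andP[_ /negbTE ->]; rewrite mulr0.
case=> r0 H; split => //; split.
  move=> i hi; have := H i hi; have := d_pos hi; nra.
apply: le_ereal_inf_tmp => _ [q [cq kq] <-].
have sq : simp q by case: cq.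
have /andP[q0 q1] := m_range i1 sq.
have emq : m i1 q = mu i1.
  by apply: kb_le0 => //; [exact: mu_range|apply/andP; split|rewrite -KLp].
have [i [hi le]] := relcl_ex cq.
have rge : forall k, k != i1 -> 0 <= r k.
  move=> k hk; have := H k hk; have := d_pos hk; nra.
rewrite (bigD1 i) //=.
apply: le_trans (leeDl _ _); last first.
  apply: sume_ge0 => k /andP[hk _]; apply: mule_ge0; first by rewrite lee_fin rge.
  by rewrite le_max lexx orbT.
apply: (@le_trans _ _ ((r i)%:E * (d i)%:E)%E).
  by rewrite -EFinM lee_fin; apply: H.
apply: lee_pmul; rewrite ?lee_fin ?rge //; first exact: ltW (d_pos hi).
rewrite le_max; apply/orP; left; rewrite sube0 KLsig ?m_pstar //; last exact: simp_p.
have /andP[_ qi1] := m_range i sq.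
apply: kb_ge; try exact: hmu1.
- by have /andP[] := mu_range i.
- exact: ltW (mu_lt hi).
- by rewrite -emq.
- done.
Qed.

Local Notation Dl i := (\sum_(k < M) (L i k - L i1 k) * p k).

Lemma Dl_pos i : i != i1 -> 0 < Dl i.
Proof. by move=> hi; rewrite loss_diff !m_pstar subr_gt0 mu_lt. Qed.

Definition rstar (i : 'I_N) : R := if i == i1 then 0 else (d i)^-1.

Lemma rstar_in : Rset L h i1 ps (fun _ => 0) rstar.
Proof.
apply/Rset_iff; split; first by rewrite /rstar eqxx.
move=> i hi; rewrite /rstar (negbTE hi) mulVf //; exact: lt0r_neq0 (d_pos hi).
Qed.

Lemma val_ge r : Rset L h i1 ps (fun _ => 0) r -> forall i, i != i1 ->
  Dl i / d i <= r i * Dl i.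
Proof.
move=> /Rset_iff [r0 H] i hi.
have dp := d_pos hi; have Dp := Dl_pos hi.
rewrite mulrC; apply: ler_wpM2r; first exact: ltW.
by rewrite -[_^-1]mul1r ler_pdivrMr //; apply: H.
Qed.

Lemma Cj_eq : Cj L h i1 p ps (fun _ => 0) =
  (\sum_(i < N | i != i1) Dl i / d i)%:E.
Proof.
apply/le_anti/andP; split.
  apply: ereal_inf_lbound; exists rstar; first exact: rstar_in.
  congr (_%:E); apply: eq_bigr => i hi; by rewrite /rstar (negbTE hi) mulrC.
apply: le_ereal_inf_tmp => _ [r hr <-]; rewrite lee_fin.
by apply: ler_sum => i hi; apply: val_ge.
Qed.

Lemma Rstar_eq : Rstar L h i1 p ps (fun _ => 0) = [set rstar].
Proof.
apply/seteqP; split => r.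
  case=> hr; rewrite Cj_eq => -[hv].
  have z : \sum_(i < N | i != i1) (r i * Dl i - Dl i / d i) = 0.
    by rewrite sumrB hv subrr.
  apply/funext => k; rewrite /rstar; case: eqP => [->|/eqP hk].
    by case/Rset_iff: hr.
  have pos : forall i, i != i1 -> 0 <= r i * Dl i - Dl i / d i.
    by move=> i hi; rewrite subr_ge0; apply: val_ge.
  have := psumr_eq0P pos z hk.
  move/eqP; rewrite subr_eq0 => /eqP e.
  apply: (mulIf (lt0r_neq0 (Dl_pos hk))); by rewrite /= e mulrC.
move=> ->; split; first exact: rstar_in.
rewrite Cj_eq; congr (_%:E); apply: eq_bigr => i hi.
by rewrite /rstar (negbTE hi) mulrC.
Qed.

End Main.

Theorem corollary4 (R : realType) (N : nat) (mu : 'I_N -> R)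
  (i1 : 'I_N) (hi1 : nat_of_ord i1 = 0%N) (hN : (2 <= N)%N)
  (hmu1 : mu i1 < 1)
  (hdec : forall i k : 'I_N, (i < k)%N -> mu k < mu i)
  (hmu0 : forall i : 'I_N, 0 < mu i) :
  let L := @Lband R N in
  let h := @Hband N in
  let p := pstar mu in
  let ps := fun i => Sig h i p in
  (exists r, Rstar L h i1 p ps (fun _ => 0) = [set r]) /\
  (exists d0 : R, 0 < d0 /\ forall delta : R, 0 <= delta -> delta < d0 ->
     let S := [set q | simplex q /\ (KL (Sig h i1 p) (Sig h i1 q) <= delta%:E)%E] in
     relcl (@simplex R _) (relint (@simplex R _) (cellc L i1) `&` S)
     = relcl (@simplex R _) (relcl (@simplex R _) (cellc L i1) `&` S)) /\
  Cj L h i1 p ps (fun _ => 0)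
    = (\sum_(i < N | i != i1)
         (\sum_(k < 2 ^ N) (L i k - L i1 k) * p k) / dber (mu i) (mu i1))%:E.
Proof.
move=> L h p ps; split.
  by exists (rstar mu i1); exact: Rstar_eq.
split; last exact: Cj_eq.
exists 1; split => // delta _ _; exact: part2.
Qed.
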